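(* Let $R$ be a Krull domain whose divisor class group $Cl(R)$ is not torsion. Then there exist a height-one prime ideal $P$ of $R$ whose class in $Cl(R)$ has infinite order, and an irreducible element $x\in P$, such that $x^2$ factors uniquely.
   Context: A nonzero nonunit $w$ of a domain $R$ factors uniquely if whenever $w=\alpha_1\cdots\alpha_n=\beta_1\cdots\beta_m$ with all $\alpha_i,\beta_j$ irreducible, then $m=n$ and after reordering, $\alpha_i=u_i\beta_i$ for units $u_i$. *)

(* Defs.v *)
From HB Require Import structures.
From mathcomp Require Import all_boot all_order all_algebra.
From mathcomp Require Import fraction.
Set Implicit Arguments. Unset Strict Implicit. Unset Printing Implicit Defensive.
Import Order.TTheory GRing.Theory Num.Theory.
Local Open Scope ring_scope.

Section Krull.
Variable R : idomainType.

Definition K := {fraction R}.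
Definition emb (x : R) : K := FracField.tofrac x.

Definition prime_ideal (P : R -> Prop) : Prop :=
  [/\ P 0,
      (forall a b, P a -> P b -> P (a + b)),
      (forall a b, P b -> P (a * b)),
      ~ P 1 &
      (forall a b, P (a * b) -> P a \/ P b)].

Definition same_ideal (P Q : R -> Prop) : Prop := forall y, P y <-> Q y.

Definition height_one (P : R -> Prop) : Prop :=
  [/\ prime_ideal P,
      (exists y, y != 0 /\ P y) &
      (forall Q, prime_ideal Q -> (forall y, Q y -> P y) ->
         (exists y, y != 0 /\ Q y) -> forall y, P y -> Q y)].

Definition loc (P : R -> Prop) (z : K) : Prop :=
  exists a b : R, ~ P b /\ z = emb a / emb b.

Definition unit_in (V : K -> Prop) (u : K) : Prop :=
  [/\ V u, u != 0 & V u^-1].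

(* t is a uniformizer of V (V is then a discrete valuation ring with
   fraction field K): t is a nonzero nonunit of V and every nonzero
   element of K is a unit of V times an integer power of t. *)
Definition uniformizer (V : K -> Prop) (t : K) : Prop :=
  [/\ V t, t != 0, ~ unit_in V t &
      forall z : K, z != 0 -> exists (u : K) (n : int), unit_in V u /\ z = u * t ^ n].

Definition DVR (V : K -> Prop) : Prop := exists t, uniformizer V t.

(* Krull domain: R = intersection of the R_P over height-one primes,
   each R_P is a DVR, and every nonzero element lies in only finitely
   many height-one primes. *)
Definition krull_domain : Prop :=
  [/\ (forall P, height_one P -> DVR (loc P)),
      (forall z : K, (forall P, height_one P -> loc P z) -> exists r : R, z = emb r) &
      (forall x : R, x != 0 -> exists s : seq (R -> Prop),
         forall P, height_one P -> P x -> exists Q, (exists i, (i < size s)%N /\ Q = nth (fun _ => False) s i) /\ same_ideal P Q)].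

Definition vP (P : R -> Prop) (z : K) (n : int) : Prop :=
  exists t u, [/\ uniformizer (loc P) t, unit_in (loc P) u & z = u * t ^ n].

(* Weil divisors: finitely supported integer functions on height-one primes
   (invariant under extensional equality of ideals). *)
Definition divisor (D : (R -> Prop) -> int) : Prop :=
  [/\ (forall P Q, same_ideal P Q -> D P = D Q),
      (forall P, D P != 0 -> height_one P) &
      (exists s : seq (R -> Prop), forall P, D P != 0 ->
          exists Q, (exists i, (i < size s)%N /\ Q = nth (fun _ => False) s i) /\ same_ideal P Q)].

Definition principal (D : (R -> Prop) -> int) : Prop :=
  exists z : K, z != 0 /\ forall Q, height_one Q -> vP Q z (D Q).

Definition cl_torsion : Prop :=
  forall D, divisor D -> exists n : nat, (0 < n)%N /\ principal (fun Q => D Q * n%:Z).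

Definition multiple_principal (P : R -> Prop) (n : int) : Prop :=
  exists z : K, [/\ z != 0, vP P z n &
    forall Q, height_one Q -> ~ same_ideal Q P -> vP Q z 0].

Definition infinite_order_class (P : R -> Prop) : Prop :=
  forall n : nat, (0 < n)%N -> ~ multiple_principal P n%:Z.

Definition irreducible_elt (x : R) : Prop :=
  [/\ x != 0, x \isn't a GRing.unit &
      forall a b, x = a * b -> a \is a GRing.unit \/ b \is a GRing.unit].

Definition factors_uniquely (w : R) : Prop :=
  [/\ w != 0, w \isn't a GRing.unit &
  forall s t : seq R, (forall a, a \in s -> irreducible_elt a) ->
    (forall b, b \in t -> irreducible_elt b) ->
    \prod_(a <- s) a = w -> \prod_(b <- t) b = w ->
    size s = size t /\
    exists t', perm_eq t t' /\
      forall i, (i < size s)%N -> exists u, u \is a GRing.unit /\ nth 0 s i = u * nth 0 t' i].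

End Krull.

(* Main.v *)
Require Import Defs.
From HB Require Import structures.
From mathcomp Require Import all_boot all_order all_algebra.
From mathcomp Require Import fraction.
From mathcomp Require Import zify.
From Stdlib Require Import Classical ClassicalEpsilon FunctionalExtensionality PropExtensionality.
Set Implicit Arguments. Unset Strict Implicit. Unset Printing Implicit Defensive.
Import Order.TTheory GRing.Theory Num.Theory.
Local Open Scope ring_scope.
Section Pf.
Variable R : idomainType.
Local Notation KK := (K R).

Lemma same_eq (P Q : R -> Prop) : same_ideal P Q -> P = Q.
Proof. move=> h; apply: functional_extensionality => y; apply: propositional_extensionality; exact: h. Qed.

Definition pb (A : Prop) : bool := if excluded_middle_informative A then true else false.
Lemma pbP A : reflect A (pb A).
Proof. rewrite /pb; case: excluded_middle_informative => h; by constructor. Qed.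

Lemma embM (a b : R) : emb (a * b) = emb a * emb b.
Proof. exact: tofracM. Qed.
Lemma emb1 : emb (1 : R) = 1.
Proof. exact: tofrac1. Qed.
Lemma embX (a : R) n : emb (a ^+ n) = emb a ^+ n.
Proof. exact: tofracXn. Qed.
Lemma emb_eq (a b : R) : (emb a == emb b) = (a == b).
Proof. exact: tofrac_eq. Qed.
Lemma emb_eq0 (a : R) : (emb a == 0) = (a == 0).
Proof. exact: tofrac_eq0. Qed.
Lemma emb_inj (a b : R) : emb a = emb b -> a = b.
Proof. by move/eqP; rewrite emb_eq => /eqP. Qed.

Section Loc.
Variable Q : R -> Prop.
Hypothesis pQ : prime_ideal Q.

Lemma loc_emb r : loc Q (emb r).
Proof.
case: pQ => _ _ _ h1 _; exists r, 1; split => //.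
by rewrite emb1 invr1 mulr1.
Qed.

Lemma loc1 : loc Q 1.
Proof. by rewrite -emb1; apply: loc_emb. Qed.

Lemma locM a b : loc Q a -> loc Q b -> loc Q (a * b).
Proof.
case: pQ => _ _ _ _ hp.
move=> [a1 [b1 [n1 ->]]] [a2 [b2 [n2 ->]]].
exists (a1 * a2), (b1 * b2); split.
  by move=> /hp [].
by rewrite !embM invfM mulrACA.
Qed.

Lemma locX a n : loc Q a -> loc Q (a ^+ n).
Proof. move=> ha; elim: n => [|n IH]; first by rewrite expr0; apply: loc1. by rewrite exprS; apply: locM. Qed.

Lemma loc_inv_emb r : ~ Q r -> loc Q (emb r)^-1.
Proof. move=> h; exists 1, r; split => //; by rewrite emb1 mul1r. Qed.

Lemma unit_inM a b : unit_in (loc Q) a -> unit_in (loc Q) b -> unit_in (loc Q) (a * b).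
Proof.
move=> [h1 h2 h3] [g1 g2 g3]; split; first exact: locM.
  by rewrite mulf_neq0.
by rewrite invfM; apply: locM.
Qed.

Lemma unit_inV a : unit_in (loc Q) a -> unit_in (loc Q) a^-1.
Proof. move=> [h1 h2 h3]; split => //; by rewrite ?invr_eq0 ?invrK. Qed.

Lemma unit_in1 : unit_in (loc Q) 1.
Proof. split; rewrite ?invr1 ?oner_neq0 //; exact: loc1. Qed.

Lemma unit_inX a n : unit_in (loc Q) a -> unit_in (loc Q) (a ^+ n).
Proof. move=> ha; elim: n => [|n IH]; first by rewrite expr0; apply: unit_in1. by rewrite exprS; apply: unit_inM. Qed.

Lemma unit_inXz a (n : int) : unit_in (loc Q) a -> unit_in (loc Q) (a ^ n).
Proof.
move=> ha; case: n => n; first by rewrite -exprnP; apply: unit_inX.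
by rewrite NegzE -exprnN; apply: unit_inV; apply: unit_inX.
Qed.

Section Unif.
Variable t : KK.
Hypothesis ut : uniformizer (loc Q) t.

Lemma tpos_unit (n : nat) : unit_in (loc Q) (t ^+ n) -> n = 0%N.
Proof.
case: ut => Vt t0 nu _.
case: n => [//|n] [h1 h2 h3]; exfalso; apply: nu; split => //.
have -> : t^-1 = t ^+ n * (t ^+ n.+1)^-1.
  by rewrite exprSr invfM mulrA mulfV ?mul1r // expf_neq0.
by apply: locM => //; apply: locX.
Qed.

Lemma tpow_unit (n : int) : unit_in (loc Q) (t ^ n) -> n = 0.
Proof.
case: n => n.
  by rewrite -exprnP => /tpos_unit ->.
rewrite NegzE -exprnN => /unit_inV; rewrite invrK => /tpos_unit //.
Qed.

Lemma upow_eq A B (n m : int) : unit_in (loc Q) A -> unit_in (loc Q) B ->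
  A * t ^ n = B * t ^ m -> n = m.
Proof.
case: ut => _ t0 _ _ hA hB e.
have : t ^ (n - m) = A^-1 * B.
  have tm0 : t ^ m != 0 by rewrite expfz_neq0.
  have A0 : A != 0 by case: hA.
  rewrite expfzDr // -invr_expz.
  apply: (mulIf tm0); rewrite divfK //.
  by rewrite -mulrA -e mulrA mulVf ?mul1r.
move=> e2; apply/eqP; rewrite -subr_eq0; apply/eqP; apply: tpow_unit.
by rewrite e2; apply: unit_inM => //; apply: unit_inV.
Qed.
End Unif.

Lemma unif_assoc t t' : uniformizer (loc Q) t -> uniformizer (loc Q) t' ->
  exists w, unit_in (loc Q) w /\ t' = w * t.
Proof.
move=> ut ut'.
have [Vt t0 nt ht] := ut. have [Vt' t0' nt' ht'] := ut'.
have [w [k [uw ew]]] := ht t' t0'.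
have [w' [j [uw' ew']]] := ht' t t0.
have kj : 1 = k * j.
  apply: (@upow_eq t ut 1 (w' * w ^ j) 1 (k * j)); first exact: unit_in1.
    by apply: unit_inM => //; apply: unit_inXz.
  by rewrite mul1r expr1z {1}ew' ew expfzMl exprz_exp mulrA.
have : (`|k| * `|j|)%N = 1%N by rewrite -abszM -kj.
move/eqP; rewrite muln_eq1 => /andP [/eqP k1 _].
case: k k1 ew kj => [k|k] /= k1 ew kj.
  by exists w; split => //; rewrite ew k1 expr1z.
exfalso; move: k1 => /eqP; rewrite /= eqSS => /eqP k0.
subst k.
apply: nt; split => //.
have -> : t^-1 = w^-1 * t'.
  by rewrite ew NegzE exprN1 mulrA mulVf ?mul1r //; case: uw.
by apply: locM => //; case: uw.
Qed.

Lemma vP_uniq z n m : vP Q z n -> vP Q z m -> n = m.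
Proof.
move=> [t [u [ut uu ez]]] [t' [u' [ut' uu' ez']]].
have [w [uw ew]] := unif_assoc ut ut'.
apply: (@upow_eq t ut u (u' * w ^ m) n m) => //.
  by apply: unit_inM => //; apply: unit_inXz.
by rewrite -ez ez' ew expfzMl mulrA.
Qed.

End Loc.

Definition val (Q : R -> Prop) (z : KK) : int :=
  match excluded_middle_informative (exists n, vP Q z n) with
  | left h => proj1_sig (constructive_indefinite_description _ h)
  | right _ => 0 end.

Lemma val_vP (Q : R -> Prop) z n : prime_ideal Q -> vP Q z n -> val Q z = n.
Proof.
move=> pQ h; rewrite /val; case: excluded_middle_informative => [e|[]]; last by exists n.
case: constructive_indefinite_description => m /= hm. exact (vP_uniq pQ hm h).
Qed.

Hypothesis kr : krull_domain R.

Lemma h1_prime (Q : R -> Prop) : height_one Q -> prime_ideal Q.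
Proof. by case. Qed.
Lemma h1_dvr (Q : R -> Prop) : height_one Q -> DVR (loc Q).
Proof. by case: kr => h _ _; apply: h. Qed.

Section H1.
Variable Q : R -> Prop.
Hypothesis hQ : height_one Q.
Let pQ := h1_prime hQ.

Lemma val_rep t u n : uniformizer (loc Q) t -> unit_in (loc Q) u -> val Q (u * t ^ n) = n.
Proof. move=> ut uu; apply: val_vP pQ _; by exists t, u. Qed.

Lemma val_unif t z : uniformizer (loc Q) t -> z != 0 ->
  exists u, unit_in (loc Q) u /\ z = u * t ^ val Q z.
Proof.
move=> ut z0; have [_ _ _ ht] := ut. have [u [n [uu ez]]] := ht z z0.
exists u; split => //.
have -> : val Q z = n by rewrite ez; apply: val_rep.
exact: ez.
Qed.

Lemma val_spec z : z != 0 -> exists t u,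
  [/\ uniformizer (loc Q) t, unit_in (loc Q) u & z = u * t ^ val Q z].
Proof.
move=> z0; have [t ut] := h1_dvr hQ.
have [u [uu ez]] := val_unif ut z0; by exists t, u.
Qed.

Lemma vP_val z : z != 0 -> vP Q z (val Q z).
Proof. move=> z0; have [t [u [ut uu ez]]] := val_spec z0; by exists t, u. Qed.

Lemma valM a b : a != 0 -> b != 0 -> val Q (a * b) = val Q a + val Q b.
Proof.
move=> a0 b0; have [t ut] := h1_dvr hQ.
have [ua [uua ea]] := val_unif ut a0.
have [ub [uub eb]] := val_unif ut b0.
rewrite {1}ea {1}eb mulrACA -expfzDr; last by case: ut.
apply: val_rep => //; exact: unit_inM.
Qed.

Lemma val_expz a (k : int) : a != 0 -> val Q (a ^ k) = val Q a * k.
Proof.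
move=> a0; have [t ut] := h1_dvr hQ.
have [ua [uua ea]] := val_unif ut a0.
rewrite {1}ea expfzMl exprz_exp.
apply: val_rep => //; exact: unit_inXz.
Qed.

Lemma val_inv a : a != 0 -> val Q a^-1 = - val Q a.
Proof. move=> a0; by rewrite -exprN1 val_expz // mulrN1. Qed.

Lemma valX a (k : nat) : a != 0 -> val Q (a ^+ k) = val Q a * k%:Z.
Proof. move=> a0; by rewrite exprnP val_expz. Qed.

Lemma val1 : val Q 1 = 0.
Proof.
have [t ut] := h1_dvr hQ.
rewrite -(mulr1 1) -{2}(expr0z t); apply: val_rep => //; exact: unit_in1.
Qed.

Lemma val_ge0 z : z != 0 -> loc Q z <-> 0 <= val Q z.
Proof.
move=> z0; have [t [u [ut uu ez]]] := val_spec z0.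
have [Vt t0 nt _] := ut.
case: (val Q z) ez => k ez; split => // h.
- rewrite ez -exprnP; apply: (locM pQ); first by case: uu.
  exact: locX.
- exfalso.
  have h2 : loc Q (t ^+ k.+1)^-1.
    have -> : (t ^+ k.+1)^-1 = u^-1 * z by rewrite ez NegzE -exprnN mulrA mulVf ?mul1r //; case: uu.
    apply: (locM pQ _ h); by case: uu.
  apply: nt; split => //.
  have -> : t^-1 = t ^+ k * (t ^+ k.+1)^-1.
    by rewrite exprSr invfM mulrA mulfV ?mul1r // expf_neq0.
  by apply: (locM pQ _ h2); apply: locX.
Qed.

Lemma val0_inv z : z != 0 -> val Q z = 0 -> loc Q z^-1.
Proof.
move=> z0 v0; have zi0 : z^-1 != 0 by rewrite invr_eq0.
apply/(val_ge0 zi0).2; by rewrite val_inv // v0.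
Qed.

Lemma val_emb_ge0 r : r != 0 -> 0 <= val Q (emb r).
Proof. move=> r0; have er0 : emb r != 0 by rewrite emb_eq0.
apply/(val_ge0 er0).1; exact: (loc_emb pQ). Qed.

Lemma val_emb_pos r : r != 0 -> Q r <-> 0 < val Q (emb r).
Proof.
move=> r0; have er0 : emb r != 0 by rewrite emb_eq0.
have g0 := val_emb_ge0 r0.
split => h.
- rewrite lt_def g0 andbT; apply/eqP => v0.
  have [a [b [nb e]]] := val0_inv er0 v0.
  have b0 : emb b != 0.
    rewrite emb_eq0; apply/eqP => b0; apply: nb; rewrite b0; by case: pQ.
  have : emb (a * r) = emb b.
    rewrite embM.
    have -> : emb a = (emb r)^-1 * emb b by rewrite e divfK.
    by rewrite mulrAC mulVf ?mul1r.
  move/emb_inj => eb; apply: nb; rewrite -eb; case: pQ => _ _ hm _ _; exact: hm.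
- apply: NNPP => nq.
  have ei0 : (emb r)^-1 != 0 by rewrite invr_eq0.
  have := (val_ge0 ei0).1 (loc_inv_emb nq).
  rewrite val_inv // oppr_ge0 => h2.
  by move: h; rewrite lt_def => /andP [/negP []]; rewrite eq_le h2 g0.
Qed.

End H1.

Lemma unit_iff (r : R) : r != 0 -> r \is a GRing.unit <-> (forall Q : R -> Prop, height_one Q -> ~ Q r).
Proof.
move=> r0; split.
- move=> ur Q hQ qr; have [_ _ hm n1 _] := h1_prime hQ.
  apply: n1; rewrite -(mulVr ur); exact: hm.
- move=> h; case: kr => _ hint _.
  have er0 : emb r != 0 by rewrite emb_eq0.
  have [s es] : exists s, (emb r)^-1 = emb s.
    apply: hint => Q hQ; apply: loc_inv_emb; exact: h.
  have rs : r * s = 1.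
    apply: emb_inj; by rewrite embM -es mulfV // emb1.
  apply/unitrP; exists s; by rewrite mulrC rs.
Qed.

Lemma intersect (z : KK) : z != 0 -> (forall Q : R -> Prop, height_one Q -> 0 <= val Q z) -> exists c, z = emb c.
Proof.
move=> z0 h; case: kr => _ hint _; apply: hint => Q hQ.
by apply/(val_ge0 hQ z0).2; apply: h.
Qed.


Lemma ex_minf (T : Type) (Y : T -> Prop) (f : T -> nat) :
  (exists c, Y c) -> exists c, Y c /\ forall c', Y c' -> (f c <= f c')%N.
Proof.
move=> [c Yc]; apply: NNPP => H.
suff : forall n c, (f c <= n)%N -> ~ Y c by move/(_ (f c) c (leqnn _)).
elim=> [|n IH] c1 le1 Y1; apply: H; exists c1; split => // c' Y'.
  by move: le1; rewrite leqn0 => /eqP ->.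
rewrite leqNgt; apply/negP => lt; apply: (IH c') => //.
by rewrite -ltnS (leq_trans lt le1).
Qed.

Lemma count_lt (T : Type) (p q : pred T) (l : seq T) j :
  (forall i, p i -> q i) -> List.In j l -> ~~ p j -> q j -> (count p l < count q l)%N.
Proof.
move=> pq; elim: l => [//|a l IH] /= [<-|jl] pj qj.
  have := sub_count pq l; rewrite (negbTE pj) qj /=; lia.
have := IH jl pj qj; case pa: (p a); first by rewrite (pq _ pa) /=; lia.
case: (q a) => /=; lia.
Qed.

Lemma ex_max (T : Type) (l : seq T) (A : T -> Prop) (le : T -> T -> Prop) :
  (forall x y, A x -> A y -> le x y \/ le y x) ->
  (forall x y z, A x -> A y -> A z -> le x y -> le y z -> le x z) ->
  (exists x, List.In x l /\ A x) ->
  exists m, [/\ List.In m l, A m & forall x, List.In x l -> A x -> le x m].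
Proof.
move=> tot tr; elim: l => [|a l IH]; first by case=> x [].
move=> [x0 [x0l Ax0]].
have laa : A a -> le a a by move=> Aa; case: (tot a a Aa Aa).
case: (classic (exists x, List.In x l /\ A x)) => [ex|nex].
  have [m [ml Am hm]] := IH ex.
  case: (classic (A a)) => [Aa|nAa].
    case: (tot a m Aa Am) => [am|ma].
      exists m; split => //; first by right.
      by move=> x /= [<-|xl] Ax //; apply: hm.
    exists a; split => //; first by left.
    move=> x /= [<-|xl] Ax; first exact: laa.
    exact: (tr x m a) (hm x xl Ax) ma.
  exists m; split => //; first by right.
  by move=> x /= [<-|xl] Ax //; apply: hm.
case: (classic (A a)) => [Aa|nAa].
  exists a; split => //; first by left.
  move=> x /= [<-|xl] Ax; first exact: laa.
  by exfalso; apply: nex; exists x.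
exfalso; case: x0l => [ax|xl]; first by apply: nAa; rewrite ax.
by apply: nex; exists x0.
Qed.

Lemma In_nth (T : Type) (s : seq T) x0 i : (i < size s)%N -> List.In (nth x0 s i) s.
Proof.
elim: s i => [//|a s IH] [|i] /=; first by left.
by move=> h; right; apply: IH.
Qed.

Definition v (Q : R -> Prop) (r : R) := val Q (emb r).

Lemma val_comb (Q : R -> Prop) (a b : R) (k l : int) : height_one Q -> a != 0 -> b != 0 ->
  val Q (emb a ^ k * emb b ^ l) = v Q a * k + v Q b * l.
Proof.
move=> hQ a0 b0; have ea : emb a != 0 by rewrite emb_eq0.
have eb : emb b != 0 by rewrite emb_eq0.
by rewrite valM ?expfz_neq0 // !val_expz.
Qed.

Lemma v_ge0 (Q : R -> Prop) r : height_one Q -> r != 0 -> 0 <= v Q r.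
Proof. move=> hQ r0; exact: val_emb_ge0. Qed.

Lemma v_pos (Q : R -> Prop) r : height_one Q -> r != 0 -> Q r <-> 0 < v Q r.
Proof. move=> hQ r0; exact: val_emb_pos. Qed.

Lemma v_zero (Q : R -> Prop) r : height_one Q -> r != 0 -> ~ Q r -> v Q r = 0.
Proof.
move=> hQ r0 nq; have g := v_ge0 hQ r0.
apply/eqP; rewrite eq_le g andbT leNgt; apply/negP => h; apply: nq.
exact/(v_pos hQ r0).2.
Qed.

Lemma mulr_ideal (Q : R -> Prop) a b : prime_ideal Q -> Q a -> Q (a * b).
Proof. move=> [_ _ hm _ _] qa; rewrite mulrC; exact: hm. Qed.

Section Main.
Variable P : R -> Prop.
Hypothesis hP : height_one P.
Let pP := h1_prime hP.
Variable y0 : R.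
Hypothesis y0nz : y0 != 0.
Hypothesis Py0 : P y0.
Variable s0 : seq (R -> Prop).
Hypothesis hs0 : forall Q, height_one Q -> Q y0 -> List.In Q s0.

Definition cnt (c : R) := count (fun Q => pb (height_one Q /\ Q c)) s0.
Definition Ycand (c : R) := [/\ c != 0, P c & forall Q, height_one Q -> Q c -> Q y0].

Variable y1 : R.
Hypothesis Y1 : Ycand y1.
Hypothesis min1 : forall c, Ycand c -> (cnt y1 <= cnt c)%N.

Lemma y1nz : y1 != 0. Proof. by case: Y1. Qed.
Lemma Py1 : P y1. Proof. by case: Y1. Qed.

Lemma minsupp c : c != 0 -> P c -> (forall Q, height_one Q -> Q c -> Q y1) ->
  forall Q, height_one Q -> Q y1 -> Q c.
Proof.
move=> c0 Pc sc Q hQ Qy; apply: NNPP => nQc.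
have Yc : Ycand c.
  split => // Q' hQ' Q'c; case: Y1 => _ _ h; exact: h _ hQ' (sc _ hQ' Q'c).
have := min1 Yc; rewrite leqNgt => /negP; apply.
apply: (@count_lt _ _ _ s0 Q).
- move=> i /pbP [hi ic]; apply/pbP; split => //; exact: sc.
- apply: hs0 => //; case: Y1 => _ _ h; exact: h.
- by apply/pbP => [[_]].
- by apply/pbP.
Qed.

Definition g Q := v Q y1.

Lemma keyK (z : KK) : z != 0 -> (forall Q, height_one Q -> 0 <= val Q z) ->
  (forall Q, height_one Q -> ~ Q y1 -> val Q z = 0) ->
  (exists Q0, [/\ height_one Q0, Q0 y1 & val Q0 z = 0]) -> val P z = 0.
Proof.
move=> z0 hge hout [Q0 [hQ0 Q0y vQ0]].
have [c ez] := intersect z0 hge.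
have c0 : c != 0 by apply/eqP => c0; move: z0; rewrite ez c0 /emb tofrac0 eqxx.
apply: NNPP => vP0.
have Pc : P c.
  apply/(v_pos hP c0).2; rewrite /v -ez lt_def hge // andbT; exact/eqP.
have sc : forall Q, height_one Q -> Q c -> Q y1.
  move=> Q hQ Qc; apply: NNPP => nQ.
  have := (v_pos hQ c0).1 Qc; rewrite /v -ez hout //; by rewrite ltxx.
have := (v_pos hQ0 c0).1 (minsupp c0 Pc sc hQ0 Q0y).
by rewrite /v -ez vQ0 ltxx.
Qed.

Lemma gP_pos : 0 < g P.
Proof. exact/(v_pos hP y1nz).1/Py1. Qed.

Lemma ratio r : r != 0 -> (forall Q, height_one Q -> Q r -> Q y1) ->
  forall Q, height_one Q -> v Q r * g P = v P r * g Q.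
Proof.
move=> r0 sr.
pose A Q := height_one Q /\ Q y1.
have gpos : forall Q, A Q -> 0 < g Q.
  by move=> Q [hQ Qy]; apply/(v_pos hQ y1nz).1.
have rge : forall Q, A Q -> 0 <= v Q r by move=> Q [hQ _]; apply: v_ge0.
have out : forall Q, height_one Q -> ~ Q y1 -> v Q r = 0 /\ g Q = 0.
  move=> Q hQ nq; split; apply: v_zero => //; [|exact: y1nz].
  by move=> qr; apply: nq; apply: sr.
have exA : exists x, List.In x s0 /\ A x.
  exists P; split; last by split => //; exact: Py1.
  apply: hs0 => //.
pose le1 Q Q' := v Q r * g Q' <= v Q' r * g Q.
have tot1 : forall x y, A x -> A y -> le1 x y \/ le1 y x.
  move=> x y _ _; rewrite /le1; case: (lerP (v x r * g y) (v y r * g x)) => h; [by left|right].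
  by rewrite ltW.
have tr1 : forall x y z, A x -> A y -> A z -> le1 x y -> le1 y z -> le1 x z.
  move=> x y z Ax Ay Az; rewrite /le1 => h1 h2.
  have gx := gpos _ Ax; have gy := gpos _ Ay; have gz := gpos _ Az.
  nia.
have [Q1 [_ AQ1 hQ1]] := ex_max tot1 tr1 exA.
pose le2 Q Q' := le1 Q' Q.
have tot2 : forall x y, A x -> A y -> le2 x y \/ le2 y x.
  by move=> x y Ax Ay; rewrite /le2; case: (tot1 x y Ax Ay); [right|left].
have tr2 : forall x y z, A x -> A y -> A z -> le2 x y -> le2 y z -> le2 x z.
  by move=> x y z Ax Ay Az h1 h2; rewrite /le2; apply: (tr1 z y x).
have [Q0 [_ AQ0 hQ0]] := ex_max tot2 tr2 exA.
have y10 := y1nz.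
have inS : forall Q, height_one Q -> Q y1 -> List.In Q s0.
  move=> Q hQ Qy; apply: hs0 => //; case: Y1 => _ _ h; exact: h.
have [hQ1h Q1y] := AQ1. have [hQ0h Q0y] := AQ0.
have e1 : v Q1 r * g P = v P r * g Q1.
  have := @keyK (emb y1 ^ (v Q1 r) * emb r ^ (- g Q1)).
  rewrite val_comb // => h.
  have : v P y1 * v Q1 r + v P r * - g Q1 = 0.
    apply: h.
    - by rewrite mulf_neq0 // expfz_neq0 // emb_eq0.
    - move=> Q hQ; rewrite val_comb //.
      case: (classic (Q y1)) => Qy.
        have := hQ1 Q (inS Q hQ Qy) (conj hQ Qy); rewrite /le1 /g; nia.
      by have [o1 o2] := out Q hQ Qy; rewrite /g in o2; rewrite o1 o2; lia.
    - move=> Q hQ Qy; rewrite val_comb //.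
      by have [o1 o2] := out Q hQ Qy; rewrite /g in o2; rewrite o1 o2; lia.
    - exists Q1; split => //; rewrite val_comb // /g; nia.
  rewrite /g; nia.
have e0 : v Q0 r * g P = v P r * g Q0.
  have := @keyK (emb r ^ (g Q0) * emb y1 ^ (- v Q0 r)).
  rewrite val_comb // => h.
  have : v P r * g Q0 + v P y1 * - v Q0 r = 0.
    apply: h.
    - by rewrite mulf_neq0 // expfz_neq0 // emb_eq0.
    - move=> Q hQ; rewrite val_comb //.
      case: (classic (Q y1)) => Qy.
        have := hQ0 Q (inS Q hQ Qy) (conj hQ Qy); rewrite /le2 /le1 /g; nia.
      by have [o1 o2] := out Q hQ Qy; rewrite /g in o2; rewrite o1 o2; lia.
    - move=> Q hQ Qy; rewrite val_comb //.
      by have [o1 o2] := out Q hQ Qy; rewrite /g in o2; rewrite o1 o2; lia.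
    - exists Q0; split => //; rewrite val_comb // /g; nia.
  rewrite /g; nia.
move=> Q hQ; case: (classic (Q y1)) => Qy; last first.
  by have [o1 o2] := out Q hQ Qy; rewrite o1 o2; lia.
have l1 := hQ1 Q (inS Q hQ Qy) (conj hQ Qy).
have l0 := hQ0 Q (inS Q hQ Qy) (conj hQ Qy).
move: l1 l0; rewrite /le2 /le1 => l1 l0.
have gQ := gpos Q (conj hQ Qy).
have gQ1 := gpos Q1 AQ1. have gQ0 := gpos Q0 AQ0. have gp := gP_pos.
apply/eqP; rewrite eq_le; apply/andP; split.
- rewrite -(ler_pM2r gQ1). nia.
- rewrite -(ler_pM2r gQ0). nia.
Qed.


Lemma cancel_pow (x c : R) (m k : nat) : x != 0 -> x \isn't a GRing.unit -> c \is a GRing.unit ->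
  x ^+ m = c * x ^+ k -> m = k.
Proof.
move=> x0 nu uc e.
case: (leqP m k) => h.
  move: e; have [d ->] : exists d, k = (m + d)%N by exists (k - m)%N; lia.
  rewrite exprD mulrA -{1}(mul1r (x ^+ m)) mulrAC => /mulIf.
  rewrite expf_neq0 // => /(_ isT) e1.
  case: d e1 => [|d] e1; first by rewrite addn0.
  exfalso; move/negP: nu; apply.
  rewrite -(unitrX_pos x (ltn0Sn d)).
  have : x ^+ d.+1 = c^-1 by apply: (mulrI uc); rewrite divrr // mulrC.
  by move=> ->; rewrite unitrV.
move: e; have [d ->] : exists d, m = (k + d.+1)%N by exists (m - k.+1)%N; lia.
rewrite exprD mulrC => /mulIf.
rewrite expf_neq0 // => /(_ isT) e1.
exfalso; move/negP: nu; apply.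
by rewrite -(unitrX_pos x (ltn0Sn d)) e1.
Qed.

Lemma prod_assoc (x : R) (s : seq R) : (forall a, a \in s -> exists u, u \is a GRing.unit /\ a = u * x) ->
  exists U, U \is a GRing.unit /\ \prod_(a <- s) a = U * x ^+ size s.
Proof.
elim: s => [|a s IH] h; first by exists 1; rewrite big_nil unitr1 mul1r expr0.
have [u [uu ea]] := h a (mem_head _ _).
have [U [uU eU]] : exists U, U \is a GRing.unit /\ \prod_(a <- s) a = U * x ^+ size s.
  by apply: IH => b bs; apply: h; rewrite in_cons bs orbT.
exists (u * U); split; first by rewrite unitrM uu uU.
by rewrite big_cons eU ea /= exprS; rewrite mulrACA.
Qed.

Variable x : R.
Hypothesis x0 : x != 0.
Hypothesis Px : P x.
Hypothesis sx : forall Q, height_one Q -> Q x -> Q y1.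
Hypothesis minx : forall c, c != 0 -> P c -> (forall Q, height_one Q -> Q c -> Q y1) ->
  (`|v P x| <= `|v P c|)%N.

Lemma repr r : r != 0 -> (forall Q, height_one Q -> Q r -> Q y1) ->
  exists (c : R) (q : nat), c \is a GRing.unit /\ r = c * x ^+ q.
Proof.
move=> r0 sr.
have rr := ratio r0 sr. have rx := ratio x0 sx.
have vPx : 0 < v P x by apply/(v_pos hP x0).1.
have vPr : 0 <= v P r by apply: v_ge0.
have gp := gP_pos.
set a := `|v P r|%N. set b := `|v P x|%N.
have ea : v P r = a%:Z by rewrite /a abszE ger0_norm.
have eb : v P x = b%:Z by rewrite /b abszE gtr0_norm.
have b0 : (0 < b)%N by move: vPx; rewrite eb; lia.
set q := (a %/ b)%N. set m := (a %% b)%N.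
have eam : a = (q * b + m)%N by rewrite /q /m -divn_eq.
have mb : (m < b)%N by rewrite /m ltn_mod.
pose z := emb r ^ (1 : int) * emb x ^ (- (q%:Z)).
have z0 : z != 0 by rewrite /z mulf_neq0 // expfz_neq0 // emb_eq0.
have vz : forall Q, height_one Q -> val Q z * b%:Z * g P = g Q * b%:Z * m%:Z.
  move=> Q hQ; rewrite /z val_comb //.
  have := rr Q hQ; have := rx Q hQ; rewrite ea eb eam; nia.
have gQ : forall Q, height_one Q -> 0 <= g Q by move=> Q hQ; apply: v_ge0 => //; exact: y1nz.
have vz0 : forall Q, height_one Q -> 0 <= val Q z.
  move=> Q hQ; have := vz Q hQ; have := gQ Q hQ; nia.
have [c ez] := intersect z0 vz0.
have c0 : c != 0 by apply/eqP => c0; move: z0; rewrite ez c0 /emb tofrac0 eqxx.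
case: (posnP m) => m0; last first.
  exfalso.
  have vPz : val P z = m%:Z.
    have := vz P hP; nia.
  have Pc : P c by apply/(v_pos hP c0).2; rewrite /v -ez vPz; lia.
  have sc : forall Q, height_one Q -> Q c -> Q y1.
    move=> Q hQ Qc; apply: NNPP => nQ.
    have : g Q = 0 by apply: v_zero => //; exact: y1nz.
    have := (v_pos hQ c0).1 Qc; rewrite /v -ez => h1 h2.
    have := vz Q hQ; rewrite h2; nia.
  have := minx c0 Pc sc; rewrite -/b.
  have : `|v P c|%N = m by rewrite /v -ez vPz.
  lia.
have uc : c \is a GRing.unit.
  apply/(unit_iff c0) => Q hQ Qc.
  have := (v_pos hQ c0).1 Qc; rewrite /v -ez.
  have := vz Q hQ; rewrite m0; nia.
exists c, q; split => //.
apply: emb_inj; rewrite embM embX -ez /z expr1z exprnP -mulrA -expfzDr ?emb_eq0 //.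
by rewrite addNr expr0z mulr1.
Qed.

Lemma xnu : x \isn't a GRing.unit.
Proof. apply/negP => /(unit_iff x0) h; exact: h P hP Px. Qed.

Lemma x_irr : irreducible_elt x.
Proof.
split => //; first exact: xnu.
move=> a b e.
have a0 : a != 0 by apply/eqP => a0; move: x0; rewrite e a0 mul0r eqxx.
have b0 : b != 0 by apply/eqP => b0; move: x0; rewrite e b0 mulr0 eqxx.
have sa : forall Q, height_one Q -> Q a -> Q y1.
  move=> Q hQ Qa; apply: sx => //; rewrite e; exact: mulr_ideal (h1_prime hQ) Qa.
have sb : forall Q, height_one Q -> Q b -> Q y1.
  move=> Q hQ Qb; apply: sx => //; rewrite e mulrC; exact: mulr_ideal (h1_prime hQ) Qb.
have [ca [qa [uca ea]]] := repr a0 sa.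
have [cb [qb [ucb eb]]] := repr b0 sb.
have : x ^+ 1 = (ca * cb) * x ^+ (qa + qb).
  by rewrite expr1 {1}e ea eb exprD mulrACA.
move/cancel_pow => /(_ x0 xnu); rewrite unitrM uca ucb => /(_ isT) h.
case: qa h ea => [|qa] h ea.
  by left; rewrite ea expr0 mulr1.
case: qb h eb => [|qb] h eb; last by lia.
by right; rewrite eb expr0 mulr1.
Qed.

Lemma irr_div a b : irreducible_elt a -> a * b = x ^+ 2 -> exists u, u \is a GRing.unit /\ a = u * x.
Proof.
move=> [a0 nua ia] e.
have sa : forall Q, height_one Q -> Q a -> Q y1.
  move=> Q hQ Qa; apply: sx => //.
  have pQ := h1_prime hQ.
  have : Q (x * x) by rewrite -expr2 -e; exact: mulr_ideal pQ Qa.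
  by case: pQ => _ _ _ _ hp /hp [].
have [c [q [uc ea]]] := repr a0 sa.
case: q ea => [|[|q]] ea.
- by exfalso; move/negP: nua; apply; rewrite ea expr0 mulr1.
- by exists c; rewrite ea expr1.
- exfalso.
  have : a = (c * x ^+ q.+1) * x by rewrite ea exprSr mulrA.
  move/ia => [].
  + move=> h; apply: (negP xnu); rewrite -(unitrX_pos x (ltn0Sn q)).
    by move: h; rewrite unitrM uc.
  + exact/negP/xnu.
Qed.

Lemma fact_size (s : seq R) : (forall a, a \in s -> irreducible_elt a) ->
  \prod_(a <- s) a = x ^+ 2 ->
  size s = 2%N /\ forall a, a \in s -> exists u, u \is a GRing.unit /\ a = u * x.
Proof.
move=> hs e.
have ha : forall a, a \in s -> exists u, u \is a GRing.unit /\ a = u * x.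
  move=> a as_; apply: (@irr_div a (\prod_(b <- rem a s) b)); first exact: hs.
  by rewrite -e (big_rem a as_).
split => //.
have [U [uU eU]] := prod_assoc ha.
apply/esym/(@cancel_pow x U) => //; first exact: xnu.
by rewrite -eU.
Qed.

Lemma x2_fu : factors_uniquely (x ^+ 2).
Proof.
split.
- by rewrite expf_neq0.
- by rewrite unitrX_pos //; exact: xnu.
move=> s t hs ht es et.
have [ss hs'] := fact_size hs es.
have [st ht'] := fact_size ht et.
split; first by rewrite ss st.
exists t; split; first exact: perm_refl.
move=> i ltis.
have [u [uu eu]] := hs' _ (mem_nth 0 ltis).
have ltit : (i < size t)%N by rewrite st -ss.
have [w [uw ew]] := ht' _ (mem_nth 0 ltit).
exists (u / w); split; first by rewrite unitrM uu unitrV.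
by rewrite eu ew mulrA divrK.
Qed.

End Main.

Lemma tor_list (s : seq (R -> Prop)) : (forall P : R -> Prop, height_one P -> ~ infinite_order_class P) ->
  forall D : (R -> Prop) -> int, (forall P, D P != 0 -> height_one P) ->
  (forall P, D P != 0 -> List.In P s) ->
  exists n : nat, (0 < n)%N /\ principal (fun Q => D Q * n%:Z).
Proof.
move=> hfin; elim: s => [|Q0 s IH] D hD hs.
- exists 1%N; split => //; exists 1; split; first exact: oner_neq0.
  move=> Q hQ.
  have -> : D Q = 0 by apply/eqP; apply: NNPP => /negP h; exact: (hs Q h).
  by rewrite mul0r -(val1 hQ); apply: vP_val => //; exact: oner_neq0.
- case: (eqVneq (D Q0) 0) => DQ0.
    apply: IH => // P dP; case: (hs P dP) => // eP.
    by move: dP; rewrite -eP DQ0 eqxx.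
  have hQ0 := hD Q0 DQ0.
  have [n0 [n0p [z0 [z00 vz0 vzo]]]] : exists n0 : nat, (0 < n0)%N /\ multiple_principal Q0 n0%:Z.
    apply: NNPP => h; apply: (hfin Q0 hQ0) => n np mp; apply: h; by exists n.
  pose D' := fun P => if pb (P = Q0) then 0 else D P.
  have [N [Np [z' [z'0 vz']]]] : exists n : nat, (0 < n)%N /\ principal (fun Q => D' Q * n%:Z).
    apply: IH.
    - move=> P; rewrite /D'; case: pbP => [_|_]; [by rewrite eqxx|exact: hD].
    - move=> P; rewrite /D'; case: pbP => [_|nP dP]; first by rewrite eqxx.
      by case: (hs P dP) => // eP; exfalso; apply: nP.
  exists (N * n0)%N; split; first by rewrite muln_gt0 Np.
  have zz : z' ^+ n0 * z0 ^ (D Q0 * N%:Z) != 0.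
    by rewrite mulf_neq0 // ?expf_neq0 // expfz_neq0.
  exists (z' ^+ n0 * z0 ^ (D Q0 * N%:Z)); split => // Q hQ.
  have ez' := val_vP (h1_prime hQ) (vz' Q hQ).
  have -> : D Q * (N * n0)%N%:Z = val Q (z' ^+ n0 * z0 ^ (D Q0 * N%:Z)).
    rewrite valM ?expf_neq0 ?expfz_neq0 // valX // val_expz // ez'.
    rewrite /D'; case: pbP => [eQ|nQ].
      subst Q; rewrite (val_vP (h1_prime hQ) vz0) PoszM; nia.
    have nsame : ~ same_ideal Q Q0 by move=> sq; apply: nQ; apply: same_eq.
    rewrite (val_vP (h1_prime hQ) (vzo Q hQ nsame)) PoszM; nia.
  exact: vP_val.
Qed.

Lemma torsion : (forall P : R -> Prop, height_one P -> ~ infinite_order_class P) -> cl_torsion R.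
Proof.
move=> hfin D [_ hD [s hs]].
apply: (@tor_list s hfin D hD) => P dP.
have [Q [[i [lti eQ]] sPQ]] := hs P dP.
rewrite (same_eq sPQ) eQ; exact: In_nth.
Qed.

End Pf.

Theorem mainTheorem4 (R : idomainType) :
  krull_domain R -> ~ cl_torsion R ->
  exists (P : R -> Prop) (x : R),
    [/\ height_one P, infinite_order_class P, P x, irreducible_elt x &
        factors_uniquely (x ^+ 2)].
Proof.
move=> kr nt.
have [P [hP inf]] : exists P : R -> Prop, height_one P /\ infinite_order_class P.
  apply: NNPP => h; apply: nt; apply: (torsion kr) => P hP iP; apply: h; by exists P.
have [y0 [y0nz Py0]] : exists y, y != 0 /\ P y by case: hP.
have [s0 hs] : exists s : seq (R -> Prop), forall P, height_one P -> P y0 -> exists Q,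
    (exists i, (i < size s)%N /\ Q = nth (fun _ => False) s i) /\ same_ideal P Q.
  by case: kr => _ _ hfc; apply: hfc.
have hs0 : forall Q, height_one Q -> Q y0 -> List.In Q s0.
  move=> Q hQ Qy; have [Q' [[i [lti eQ]] sQ]] := hs Q hQ Qy.
  rewrite (same_eq sQ) eQ; exact: In_nth.
have [y1 [Y1 min1]] := @ex_minf R (Ycand P y0) (cnt s0) (ex_intro _ y0 (And3 y0nz Py0 (fun _ _ h => h))).
have y1nz : y1 != 0 by case: Y1.
have Py1 : P y1 by case: Y1.
have [x [[x0 Px sx] minx]] := @ex_minf R
  (fun c => [/\ c != 0, P c & forall Q, height_one Q -> Q c -> Q y1]) (fun c => `|v P c|%N)
  (ex_intro _ y1 (And3 y1nz Py1 (fun _ _ h => h))).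
have minx' : forall c, c != 0 -> P c -> (forall Q, height_one Q -> Q c -> Q y1) ->
    (`|v P x| <= `|v P c|)%N.
  by move=> c c0 Pc sc; apply: minx.
exists P, x; split => //.
- exact: (x_irr kr hP y0nz Py0 hs0 Y1 min1 x0 Px sx minx').
- exact: (x2_fu kr hP y0nz Py0 hs0 Y1 min1 x0 Px sx minx').
Qed.
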